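(* Let $k$ be a field and $f:R\to S$ a homomorphism of commutative $k$-algebras which maps an ideal $I$ of $R$ isomorphically onto an ideal of $S$ (also denoted $I$). Let $HH_0(R,S,I)$ denote the cokernel of the induced map $HH_1(R,I)\to HH_1(S,I)$. Then the map $S\otimes I+I\otimes S\to I\otimes_S\Omega_{S/R}$ given by $x\otimes r\mapsto x\otimes dr$ and $r\otimes x\mapsto -x\otimes dr$ ($x\in I$, $r\in S$) induces isomorphisms of $R$-modules $$HH_0(R,S,I)\cong I\otimes_S\Omega_{S/R}\cong(I/I^2)\otimes_{S/I}\Omega_{(S/I)/(R/I)}.$$
   Context: Tensor products without subscript are over $k$. For a commutative $k$-algebra $T$ and ideal $I$, $HH_1(T,I)$ is the quotient of $T\otimes I+I\otimes T\subseteq T\otimes T$ by the image of $T\otimes T\otimes I+T\otimes I\otimes T+I\otimes T\otimes T$ under $b(x\otimes y\otimes z)=xy\otimes z-x\otimes yz+zx\otimes y$; $f$ induces $HH_1(R,I)\to HH_1(S,I)$. $\Omega_{S/R}$ is the module of Kähler differentials of $S$ relative to $R$. *)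

(* Defs.v *)
From HB Require Import structures.
From mathcomp Require Import all_boot all_order all_algebra.
From mathcomp Require Import freeg.

Set Implicit Arguments.
Unset Strict Implicit.
Unset Printing Implicit Defensive.

Import Order.TTheory GRing.Theory Num.Theory.
Local Open Scope ring_scope.

Definition zspan (M : zmodType) (X : M -> Prop) (m : M) : Prop :=
  exists l : seq (M * int),
    (forall p, p \in l -> X p.1) /\ m = \sum_(p <- l) p.1 *~ p.2.

Definition sum3 (M : zmodType) (X Y Z : M -> Prop) (m : M) : Prop :=
  exists a b c, X a /\ Y b /\ Z c /\ m = a + b + c.

Definition lspan (A : pzRingType) (V : lmodType A) (X : V -> Prop) (v : V) : Prop :=
  exists l : seq (V * A),
    (forall p, p \in l -> X p.1) /\ v = \sum_(p <- l) p.2 *: p.1.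

Definition fgen (K : choiceType) (x : K) : {freeg K / int} := << x >>.

Definition fgext (K : choiceType) (M : zmodType) (g : K -> M)
  (u : {freeg K / int}) : M :=
  \sum_(x <- dom u) g x *~ coeff x u.

Definition gens_in (K : choiceType) (P : K -> Prop) (u : {freeg K / int}) :=
  forall x, x \in dom u -> P x.

(* Tensor product over A of the subquotient modules PV/NV and PW/NW    *)
(* (PV a submodule of the A-module V, NV a submodule of PV; similarly  *)
(* for W).  Its elements are represented by formal Z-linear            *)
(* combinations of pairs (v,w) with v in PV, w in PW (generators       *)
(* v (x) w), and two formal sums represent the same element iff their  *)
(* difference lies in the subgroup generated by the defining relations *)
(* of the tensor product (biadditivity, A-balancedness) together with  *)
(* n (x) w = 0 and v (x) n = 0 for n in NV resp. NW.                   *)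
Definition tens_rel (A : pzRingType) (V W : lmodType A)
  (PV NV : V -> Prop) (PW NW : W -> Prop) : {freeg (V * W) / int} -> Prop :=
  zspan (fun t =>
     (exists v v' w, [/\ PV v, PV v', PW w &
         t = fgen (v + v', w) - fgen (v, w) - fgen (v', w)])
  \/ (exists v w w', [/\ PV v, PW w, PW w' &
         t = fgen (v, w + w') - fgen (v, w) - fgen (v, w')])
  \/ (exists a v w, [/\ PV v, PW w &
         t = fgen (a *: v, w) - fgen (v, a *: w)])
  \/ (exists n w, [/\ PV n, NV n, PW w & t = fgen (n, w)])
  \/ (exists v n, [/\ PV v, PW n, NW n & t = fgen (v, n)])).

Definition is_ideal (T : comPzRingType) (I : T -> Prop) : Prop :=
  [/\ I 0, (forall x y, I x -> I y -> I (x + y)) &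
      (forall t x, I x -> I (t * x))].

Section HH.
Variables (k : fieldType) (T : comAlgType k) (I : T -> Prop).

(* T (x)_k T, elements = formal sums of pairs modulo tens_rel.         *)
Definition TT_rel : {freeg (T * T) / int} -> Prop :=
  tens_rel (V := T) (W := T) (fun _ => True) (fun _ => False)
           (fun _ => True) (fun _ => False).

(* Formal sums representing elements of T(x)I + I(x)T in T(x)T.        *)
Definition HHcycles (u : {freeg (T * T) / int}) : Prop :=
  exists v, zspan (fun t => exists x r, I x /\
                      (t = fgen (x, r) \/ t = fgen (r, x))) v
            /\ TT_rel (u - v).

(* Image under b of T(x)T(x)I + T(x)I(x)T + I(x)T(x)T, where
   b(x(x)y(x)z) = xy(x)z - x(x)yz + zx(x)y.                              *)
Definition HHbound : {freeg (T * T) / int} -> Prop :=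
  zspan (fun t => exists x y z, (I x \/ I y \/ I z) /\
     t = fgen (x * y, z) - fgen (x, y * z) + fgen (z * x, y)).

(* HH_1(T,I) = HHcycles modulo (TT_rel + HHbound).                     *)
End HH.

Definition tmap (R S : choiceType) (f : R -> S) (u : {freeg (R * R) / int})
  : {freeg (S * S) / int} :=
  fgext (fun p => fgen (f p.1, f p.2)) u.

(* Kaehler differentials Omega_{S/R} (R-algebra structure via f): the
   free S-module on symbols ds (s in S), i.e. {freeg S / S}, modulo the
   S-submodule generated by d(s+t)-ds-dt, d(st)-s dt-t ds, d(f a).     *)
Definition dsym (S : comNzRingType) (s : S) : {freeg S / S} := << s >>.

Definition Omega_rel (S : comNzRingType) (Rim : S -> Prop)
  : {freeg S / S} -> Prop :=
  lspan (fun w =>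
     (exists s t, w = dsym (s + t) - dsym s - dsym t)
  \/ (exists s t, w = dsym (s * t) - s *: dsym t - t *: dsym s)
  \/ (exists s, Rim s /\ w = dsym s)).

(* Omega_{(S/J)/(R/I)}, with S/J-objects represented by elements of S:
   the free S/J-module on symbols d(s mod J) is {freeg S / S} modulo
   coefficients in J and the identifications d(s) = d(s+y), y in J;
   then modulo the Kaehler relations (R/I acting through the image of f). *)
Definition Omega_quot_rel (S : comNzRingType) (Rim J : S -> Prop)
  : {freeg S / S} -> Prop :=
  lspan (fun w =>
     (exists y s, J y /\ w = y *: dsym s)
  \/ (exists y s, J y /\ w = dsym (s + y) - dsym s)
  \/ (exists s t, w = dsym (s + t) - dsym s - dsym t)
  \/ (exists s t, w = dsym (s * t) - s *: dsym t - t *: dsym s)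
  \/ (exists s, Rim s /\ w = dsym s)).

Definition ideal_sq (S : comNzRingType) (J : S -> Prop) : S -> Prop :=
  zspan (fun s => exists y z, J y /\ J z /\ s = y * z).

(* The map  S(x)I + I(x)S --> I (x)_S Omega_{S/R},                      *)
(*   x(x)r |-> x(x)dr,   r(x)x |-> -x(x)dr   (x in I, r in S),          *)
(* defined on formal sums of tagged generators: (true,(x,r)) stands for *)
(* the generator x(x)r with x in I, (false,(r,x)) for r(x)x with x in I. *)
Section TheMap.
Variables (S : comNzRingType) (J : S -> Prop).

Definition tagged_valid (d : {freeg (bool * (S * S)) / int}) : Prop :=
  gens_in (fun g : bool * (S * S) => if g.1 then J g.2.1 else J g.2.2) d.

Definition tag_incl (d : {freeg (bool * (S * S)) / int}) : {freeg (S * S) / int} :=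
  fgext (fun g : bool * (S * S) => fgen g.2) d.

Definition tag_phi (d : {freeg (bool * (S * S)) / int})
  : {freeg (S^o * {freeg S / S}) / int} :=
  fgext (fun g : bool * (S * S) =>
           if g.1 then fgen ((g.2.1 : S^o), dsym g.2.2)
           else - fgen ((g.2.2 : S^o), dsym g.2.1)) d.

Definition tag_act (s : S) (d : {freeg (bool * (S * S)) / int}) :=
  fgext (fun g : bool * (S * S) => fgen (g.1, (s * g.2.1, g.2.2))) d.

Definition tens_act (s : S) (t : {freeg (S^o * {freeg S / S}) / int}) :=
  fgext (fun p : S^o * {freeg S / S} => fgen ((s * p.1 : S^o), p.2)) t.
End TheMap.

(* Main.v *)
Require Import Defs.
From HB Require Import structures.
From mathcomp Require Import all_boot all_order all_algebra.
From mathcomp Require Import freeg.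
From mathcomp Require boolp classical_sets.
Import GRing.Theory.
Local Open Scope ring_scope.

Lemma proj_exists (k : fieldType) (V : lmodType k) (J : V -> Prop) :
  J 0 -> (forall x y, J x -> J y -> J (x + y)) -> (forall c x, J x -> J (c *: x)) ->
  exists p : V -> V, [/\ forall v, J (p v), forall u v, p (u + v) = p u + p v,
     forall c v, p (c *: v) = c *: p v & forall x, J x -> p x = x].
Proof.
move=> J0 JD JZ.
pose P (C : V -> Prop) := [/\ forall x, C x -> J x -> x = 0,
   forall x y, C x -> C y -> C (x + y) & forall c x, C x -> C (c *: x)].
have [A [[AJ AD AZ] Amax]] : exists A, P A /\ forall B, classical_sets.proper A B -> ~ P B.
  apply: classical_sets.Zorn_bigcup => F FP Ftot; split.
  - by move=> x [X FX Xx] Jx; case: (FP X FX) => H _ _; exact: H.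
  - move=> x y [X FX Xx] [Y FY Yy].
    case: (Ftot X Y FX FY) => [XY|YX].
    + exists Y => //; case: (FP Y FY) => _ H _; apply: H => //; exact: XY.
    + exists X => //; case: (FP X FX) => _ H _; apply: H => //; exact: YX.
  - move=> c x [X FX Xx]; exists X => //; case: (FP X FX) => _ _ H; exact: H.
pose A0 x := x = 0 \/ A x.
have A0D x y : A0 x -> A0 y -> A0 (x + y).
  case=> [->|Ax]; first by rewrite add0r.
  case=> [->|Ay]; first by rewrite addr0; right.
  by right; apply: AD.
have A0Z c x : A0 x -> A0 (c *: x).
  by case=> [->|Ax]; [left; rewrite scaler0 | right; apply: AZ].
have A0N x : A0 x -> A0 (- x) by move=> Ax; rewrite -scaleN1r; apply: A0Z.
have A0J x : A0 x -> J x -> x = 0 by case=> [//|Ax] Jx; apply: AJ.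
have dec s : exists j, J j /\ A0 (s - j).
  apply: boolp.contrapT => nd.
  pose B x := exists a c, A0 a /\ x = a + c *: s.
  apply: (Amax B); last first.
    split.
    - move=> x [a [c [Aa ->]]] Jx.
      have [c0|cn0] := eqVneq c 0.
        by rewrite c0 scale0r addr0 in Jx *; apply: A0J.
      exfalso; apply: nd; exists (c^-1 *: (a + c *: s)); split; first exact: JZ.
      have -> : s - c^-1 *: (a + c *: s) = - (c^-1 *: a).
        by rewrite scalerDr scalerA mulVf // scale1r opprD addrCA subrr addr0.
      by apply/A0N/A0Z.
    - move=> x y [a [c [Aa ->]]] [b [d [Ab ->]]]; exists (a + b), (c + d); split; first exact: A0D.
      by rewrite scalerDl addrACA.
    - move=> e x [a [c [Aa ->]]]; exists (e *: a), (e * c); split; first exact: A0Z.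
      by rewrite scalerDr scalerA.
  split.
  - by move=> x Ax; exists x, 0; split; [right | rewrite scale0r addr0].
  - move=> BA; apply: nd; exists 0; split => //; rewrite subr0; right; apply: BA.
    by exists 0, 1; split; [left | rewrite add0r scale1r].
have uniq s j j' : J j -> A0 (s - j) -> J j' -> A0 (s - j') -> j = j'.
  move=> Jj Aj Jj' Aj'; apply/eqP; rewrite -subr_eq0; apply/eqP.
  have -> : j - j' = (s - j') - (s - j) by apply/esym; rewrite opprB addrC addrA subrK.
  apply: A0J; first by apply: A0D => //; apply: A0N.
  have -> : s - j' - (s - j) = j + (-1) *: j' by rewrite scaleN1r opprB addrC addrA subrK.
  by apply: JD => //; apply: JZ.
pose p s := proj1_sig (boolp.cid (dec s)).
have pP s : J (p s) /\ A0 (s - p s) by rewrite /p; case: (boolp.cid _).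
exists p; split.
- by move=> v; case: (pP v).
- move=> u v; case: (pP u) => Ju Au; case: (pP v) => Jv Av; case: (pP (u + v)) => Juv Auv.
  apply: (uniq (u + v)) => //; first exact: JD.
  by rewrite opprD addrACA; apply: A0D.
- move=> c v; case: (pP v) => Jv Av; case: (pP (c *: v)) => Jcv Acv.
  apply: (uniq (c *: v)) => //; first exact: JZ.
  by rewrite -scalerBr; apply: A0Z.
- move=> x Jx; case: (pP x) => Jpx Apx; apply/esym; apply: (uniq x) => //.
  by rewrite subrr; left.
Qed.

Set Implicit Arguments.
Unset Strict Implicit.

Definition subg (M : zmodType) (Q : M -> Prop) :=
  Q 0 /\ forall a b, Q a -> Q b -> Q (a - b).

Section Subg.
Variables (M : zmodType) (Q : M -> Prop) (hQ : subg Q).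
Lemma sg0 : Q 0. Proof. by case: hQ. Qed.
Lemma sgB a b : Q a -> Q b -> Q (a - b). Proof. by case: hQ => _; apply. Qed.
Lemma sgN a : Q a -> Q (- a). Proof. by move=> Qa; rewrite -sub0r; apply: sgB => //; apply: sg0. Qed.
Lemma sgD a b : Q a -> Q b -> Q (a + b).
Proof. by move=> Qa Qb; rewrite -[b]opprK; apply: sgB => //; apply: sgN. Qed.
Lemma sgMn a n : Q a -> Q (a *+ n).
Proof. by move=> Qa; elim: n => [|n IH]; [rewrite mulr0n; apply: sg0 | rewrite mulrS; apply: sgD]. Qed.
Lemma sgMz a (n : int) : Q a -> Q (a *~ n).
Proof. by move=> Qa; case: n => n; [apply: sgMn | rewrite NegzE mulrNz; apply/sgN/sgMn]. Qed.
Lemma sg_sum (I : Type) (r : seq I) (P : pred I) (F : I -> M) :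
  (forall i, P i -> Q (F i)) -> Q (\sum_(i <- r | P i) F i).
Proof. by move=> H; elim/big_rec: _ => [|i x Pi Qx]; [apply: sg0 | apply: sgD => //; apply: H]. Qed.
End Subg.

Lemma zspan_subg (M : zmodType) (X : M -> Prop) : subg (zspan X).
Proof.
split; first by exists [::]; split => //; rewrite big_nil.
move=> a b [la [Ha ->]] [lb [Hb ->]].
exists (la ++ [seq (p.1, - p.2) | p <- lb]); split.
  by move=> p; rewrite mem_cat => /orP[/Ha//|/mapP[q /Hb ? ->]].
by rewrite big_cat big_map /= -sumrN; congr (_ + _); apply: eq_bigr => p _; rewrite mulrNz.
Qed.

Lemma zspan_gen (M : zmodType) (X : M -> Prop) x : X x -> zspan X x.
Proof. by move=> Xx; exists [:: (x, 1%:Z)]; split; [move=> p; rewrite inE => /eqP -> | rewrite big_seq1]. Qed.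

Lemma zspan_ind (M N : zmodType) (h : {additive M -> N}) (X : M -> Prop) (Q : N -> Prop) :
  subg Q -> (forall x, X x -> Q (h x)) -> forall m, zspan X m -> Q (h m).
Proof.
move=> hQ H m [l [Hl ->]]; rewrite raddf_sum big_seq; apply: sg_sum => // p pl.
by rewrite raddfMz; apply: sgMz => //; apply: H; apply: Hl.
Qed.

Section Fgext.
Variables (K : choiceType) (M : zmodType).
Implicit Types (g : K -> M) (u v : {freeg K / int}).

Lemma fgext_seq g u (L : seq K) : uniq L -> {subset dom u <= L} ->
  fgext g u = \sum_(x <- L) g x *~ coeff x u.
Proof.
move=> uL sub; rewrite (bigID (fun x => x \in dom u)) /=.
rewrite [X in _ + X]big1 ?addr0; last first.
  by move=> x xn; rewrite coeff_outdom // mulrz0.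
rewrite /fgext -big_filter; apply: perm_big.
apply: uniq_perm; first exact: uniq_dom.
  exact: filter_uniq.
by move=> x; rewrite mem_filter; case xd: (x \in dom u) => //=; rewrite (sub _ xd).
Qed.

Lemma fgext_is_additive g : additive (fgext g).
Proof.
move=> u v; set L := undup (dom u ++ dom v).
have uL : uniq L by apply: undup_uniq.
have sub1 : {subset dom u <= L} by move=> x xd; rewrite mem_undup mem_cat xd.
have sub2 : {subset dom v <= L} by move=> x xd; rewrite mem_undup mem_cat xd orbT.
have sub3 : {subset dom (u - v) <= L} by move=> x /domB; rewrite mem_undup.
rewrite (fgext_seq g uL sub1) (fgext_seq g uL sub2) (fgext_seq g uL sub3).
rewrite -sumrB; apply: eq_bigr => x _.
by rewrite coeffB mulrzBr.
Qed.

HB.instance Definition _ g := GRing.isAdditive.Build {freeg K / int} M (fgext g)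
  (fgext_is_additive g).

Lemma fgext_gen g x : fgext g (fgen x) = g x.
Proof. by rewrite /fgext /fgen domU1 big_seq1 coeffU eqxx mulr1. Qed.

Lemma fgextB_fun g1 g2 u : fgext g1 u - fgext g2 u = fgext (fun x => g1 x - g2 x) u.
Proof. by rewrite /fgext -sumrB; apply: eq_bigr => x _; rewrite mulrzBl. Qed.

Lemma fgext_in g u (Q : M -> Prop) : subg Q -> (forall x, x \in dom u -> Q (g x)) -> Q (fgext g u).
Proof. by move=> hQ H; rewrite /fgext big_seq; apply: sg_sum => // x xd; apply: sgMz => //; apply: H. Qed.

Lemma fgext_comp (N : zmodType) (h : {additive M -> N}) g u :
  h (fgext g u) = fgext (fun x => h (g x)) u.
Proof. by rewrite /fgext raddf_sum; apply: eq_bigr => x _; rewrite raddfMz. Qed.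

Lemma fgext_ext g1 g2 u : (forall x, x \in dom u -> g1 x = g2 x) -> fgext g1 u = fgext g2 u.
Proof. by move=> H; rewrite /fgext big_seq [RHS]big_seq; apply: eq_bigr => x xd; rewrite H. Qed.
End Fgext.

Section Eqv.
Variables (M : zmodType) (Q : M -> Prop) (hQ : subg Q).
Lemma eqv_refl a : Q (a - a). Proof. by rewrite subrr; apply: sg0. Qed.
Lemma eqv_sym a b : Q (a - b) -> Q (b - a). Proof. by move=> H; rewrite -opprB; apply: sgN. Qed.
Lemma eqv_trans b a c : Q (a - b) -> Q (b - c) -> Q (a - c).
Proof. by move=> H1 H2; rewrite -[a](subrK b) -addrA; apply: sgD. Qed.
Lemma eqv_add a a' b b' : Q (a - a') -> Q (b - b') -> Q ((a + b) - (a' + b')).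
Proof. by move=> H1 H2; rewrite opprD addrACA; apply: sgD. Qed.
Lemma eqv_opp a a' : Q (a - a') -> Q (- a - - a').
Proof. by move=> H; rewrite -opprD; apply: sgN. Qed.
Lemma eqv_sub a a' b b' : Q (a - a') -> Q (b - b') -> Q ((a - b) - (a' - b')).
Proof. by move=> H1 H2; apply: eqv_add => //; apply: eqv_opp. Qed.
Lemma eqv_mem a b : Q (a - b) -> Q b -> Q a.
Proof. by move=> H1 H2; rewrite -[a](subrK b); apply: sgD. Qed.
Lemma eqv_0 a : Q (a - 0) -> Q a. Proof. by rewrite subr0. Qed.
Lemma eqv_eq a b : a = b -> Q (a - b). Proof. by move=> ->; apply: eqv_refl. Qed.
End Eqv.

Lemma lspan_sub (A : pzRingType) (V : lmodType A) (X : V -> Prop) :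
  [/\ lspan X 0, (forall u v, lspan X u -> lspan X v -> lspan X (u + v)),
      (forall a u, lspan X u -> lspan X (a *: u)) & (forall u, X u -> lspan X u)].
Proof.
split.
- by exists [::]; split => //; rewrite big_nil.
- move=> u v [lu [Hu ->]] [lv [Hv ->]]; exists (lu ++ lv); split; last by rewrite big_cat.
  by move=> p; rewrite mem_cat => /orP[/Hu|/Hv].
- move=> a u [lu [Hu ->]]; exists [seq (p.1, a * p.2) | p <- lu]; split.
    by move=> p /mapP[q /Hu ? ->].
  by rewrite big_map scaler_sumr; apply: eq_bigr => p _; rewrite scalerA.
- by move=> u Xu; exists [:: (u, 1)]; split; [move=> p; rewrite inE => /eqP -> | rewrite big_seq1 scale1r].
Qed.

Lemma lspan_ind (A : pzRingType) (V : lmodType A) (X : V -> Prop) (P : V -> Prop) :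
  P 0 -> (forall u v, P u -> P v -> P (u + v)) -> (forall a u, X u -> P (a *: u)) ->
  forall v, lspan X v -> P v.
Proof.
move=> P0 PD PZ v [l [Hl ->]]; elim: l Hl => [|q l IH] Hl; first by rewrite big_nil.
rewrite big_cons; apply: PD; first by apply: PZ; apply: Hl; rewrite inE eqxx.
by apply: IH => p pl; apply: Hl; rewrite inE pl orbT.
Qed.

Lemma sum_dom_L (K : choiceType) (A : pzRingType) (M : zmodType) (Q : M -> Prop) (w : {freeg K / A})
   (F : K -> M) (L : seq K) : subg Q -> uniq L -> {subset dom w <= L} ->
   (forall s, s \notin dom w -> Q (F s)) ->
   Q (\sum_(s <- L) F s - \sum_(s <- dom w) F s).
Proof.
move=> hQ uL sub H; rewrite (bigID (fun x => x \in dom w)) /=.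
have -> : \sum_(i <- L | i \in dom w) F i = \sum_(s <- dom w) F s.
  rewrite -big_filter; apply: perm_big.
  apply: uniq_perm; [exact: filter_uniq | exact: uniq_dom |].
  by move=> x; rewrite mem_filter; case xd: (x \in dom w) => //=; rewrite (sub _ xd).
rewrite [X in X - _]addrC addrK; apply: sg_sum => // i; exact: H.
Qed.
Section LspanL.
Variables (A : pzRingType) (V : lmodType A) (X : V -> Prop).
Lemma lspan0 : lspan X 0. Proof. by case: (lspan_sub X). Qed.
Lemma lspanD u v : lspan X u -> lspan X v -> lspan X (u + v). Proof. by case: (lspan_sub X) => _ H _ _; apply: H. Qed.
Lemma lspanZ a u : lspan X u -> lspan X (a *: u). Proof. by case: (lspan_sub X) => _ _ H _; apply: H. Qed.
Lemma lspan_gen u : X u -> lspan X u. Proof. by case: (lspan_sub X) => _ _ _ H; apply: H. Qed.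
End LspanL.
Lemma idA (M : zmodType) (a b c : M) : c = a - b - (a - c - b).
Proof. by rewrite !opprB addrA subrK addrC subrK. Qed.
Lemma idB (M : zmodType) (a b c : M) : a - c = a - b - c + b.
Proof. by rewrite addrAC subrK. Qed.
Lemma idC (M : zmodType) (a b c : M) : a - (b + c) = a - b - c.
Proof. by rewrite opprD addrA. Qed.
Lemma id1 (M : zmodType) (A B : M) : (0 - (A + B)) - ((0 + 0) - B) + (A - (0 + 0)) = 0.
Proof. by rewrite !addr0 !sub0r !subr0 opprK opprD subrK addNr. Qed.
Lemma id2 (M : zmodType) (A B : M) : (A - (0 + 0)) - ((A + B) - 0) + (B - (0 + 0)) = 0.
Proof. by rewrite !addr0 !subr0 opprD addrA subrr sub0r addNr. Qed.
Lemma id3 (M : zmodType) (A C : M) : (A - (0 + 0)) - ((0 + 0) - C) + (0 - (C + A)) = 0.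
Proof. by rewrite !addr0 !subr0 !sub0r opprK [A + C]addrC subrr. Qed.
Lemma idD (M : zmodType) (a b c : M) : a - b = - ((b - a - c) + c).
Proof. by rewrite subrK opprB. Qed.
Lemma idE (M : zmodType) (a b c d : M) : (a + b) - (c + d) = (a - c) + (b - d).
Proof. by rewrite opprD addrACA. Qed.
Lemma idF (M : zmodType) (a b c : M) : - (c - (a - b)) = a - (c + b).
Proof. by rewrite opprB opprD addrA addrAC. Qed.
Lemma idG (M : zmodType) (a b c : M) : a - b - c = - (b - a + c).
Proof. by rewrite opprD opprB. Qed.
Lemma idH (M : zmodType) (a b c : M) : (a - c + b) + c = a + b.
Proof. by rewrite addrAC subrK. Qed.
Lemma eqv_subF (M N : zmodType) (Q : N -> Prop) (g : M -> N) : subg Q ->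
  (forall a b, Q (g (a + b) - (g a + g b))) -> forall a b, Q (g (a - b) - (g a - g b)).
Proof.
move=> hQ H a b; have := H (a - b) b; rewrite subrK => h.
by rewrite -[X in Q X]opprK idF; apply: sgN.
Qed.
Lemma zspan_min (M : zmodType) (X : M -> Prop) (Q : M -> Prop) :
  subg Q -> (forall x, X x -> Q x) -> forall m, zspan X m -> Q m.
Proof.
move=> hQ H m [l [Hl ->]]; rewrite big_seq; apply: sg_sum => // p pl.
by apply: sgMz => //; apply: H; apply: Hl.
Qed.
Lemma gens_subg (K0 : choiceType) (P : K0 -> Prop) : subg (gens_in P).
Proof.
split; first by move=> x; rewrite dom0.
by move=> a b Ha Hb x /domB; rewrite mem_cat => /orP[/Ha|/Hb].
Qed.
Lemma gens_gen (K0 : choiceType) (P : K0 -> Prop) x : P x -> gens_in P (fgen x).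
Proof. by move=> Px y; rewrite /fgen domU1 inE => /eqP ->. Qed.
Lemma fgext_id (K0 : choiceType) (t : {freeg K0 / int}) : fgext (@fgen K0) t = t.
Proof.
rewrite /fgext -[RHS]freeg_sumE; apply: eq_bigr => x _.
by rewrite /fgen freeg_mulz intz.
Qed.


Section Main.
Variables (k : fieldType) (R S : comAlgType k) (f : {lrmorphism R -> S}) (I : R -> Prop).
Hypothesis hI : is_ideal I.
Hypothesis hJ : is_ideal (fun s : S => exists a, I a /\ s = f a).

Local Notation J := (fun s : S => exists a, I a /\ s = f a).
Local Notation Rim := (fun s : S => exists a, s = f a).
Local Notation W := {freeg S / S}.
Local Notation G := {freeg (S^o * {freeg S / S}) / int}.
Local Notation F := {freeg (S * S) / int}.
Local Notation TT := (@TT_rel k S).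
Local Notation Om := (Omega_rel Rim).
Local Notation Tr := (tens_rel (V := S^o) (W := {freeg S / S})
                J (fun _ => False) (fun _ => True) (Omega_rel Rim)).
Local Notation K := (sum3 TT (HHbound J) (fun u => exists v, HHcycles I v /\ u = tmap f v)).

Definition gp (x : S) (w : W) : G := fgen ((x : S^o), w).
Local Notation ds := (@dsym S).

Lemma J0 : J 0. Proof. by case: hJ. Qed.
Lemma JD x y : J x -> J y -> J (x + y). Proof. by case: hJ => _ H _; apply: H. Qed.
Lemma JM t x : J x -> J (t * x). Proof. by case: hJ => _ _ H; apply: H. Qed.
Lemma JMr t x : J x -> J (x * t). Proof. by rewrite mulrC; apply: JM. Qed.
Lemma JRim x : J x -> Rim x. Proof. by case=> a [_ ->]; exists a. Qed.
Lemma JN x : J x -> J (- x). Proof. by move=> Jx; rewrite -mulN1r; apply: JM. Qed.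
Lemma JZ (c : k) x : J x -> J (c *: x). Proof. by move=> Jx; rewrite -mulr_algl; apply: JM. Qed.

Lemma Om0 : Om 0. Proof. exact: lspan0. Qed.
Lemma OmD u v : Om u -> Om v -> Om (u + v). Proof. exact: lspanD. Qed.
Lemma OmZ a u : Om u -> Om (a *: u). Proof. exact: lspanZ. Qed.
Lemma OmN u : Om u -> Om (- u). Proof. by move=> H; rewrite -scaleN1r; apply: OmZ. Qed.
Lemma OmB u v : Om u -> Om v -> Om (u - v). Proof. by move=> ? ?; apply: OmD => //; apply: OmN. Qed.
Lemma Om_add s t : Om (ds (s + t) - ds s - ds t).
Proof. by apply: lspan_gen; left; exists s, t. Qed.
Lemma Om_mul s t : Om (ds (s * t) - s *: ds t - t *: ds s).
Proof. by apply: lspan_gen; right; left; exists s, t. Qed.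
Lemma Om_im s : Rim s -> Om (ds s).
Proof. by move=> Rs; apply: lspan_gen; right; right; exists s. Qed.
Lemma Om_sum (T : Type) (r : seq T) (P : pred T) (Fn : T -> W) :
  (forall i, P i -> Om (Fn i)) -> Om (\sum_(i <- r | P i) Fn i).
Proof. by move=> H; elim/big_rec: _ => [|i x Pi Ox]; [apply: Om0 | apply: OmD => //; apply: H]. Qed.
Lemma Om_Jd z s : J z -> Om (z *: ds s).
Proof.
move=> Jz.
rewrite [z *: ds s](idA (ds (z * s)) (s *: ds z)).
apply: OmB; last exact: Om_mul.
by apply: OmB; [apply: Om_im; apply: JRim; apply: JMr | apply: OmZ; apply: Om_im; apply: JRim].
Qed.
Lemma freegUZ (K0 : choiceType) (c : S) (x : K0) : << c *g x >> = c *: << x >>.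
Proof. by apply/eqP/freeg_eqP => y; rewrite coeffZ !coeffU mul1r. Qed.
Lemma Om_J z w : J z -> Om (z *: w).
Proof.
move=> Jz; rewrite -[w]freeg_sumE scaler_sumr.
elim/big_rec: _ => [|i x _ Ox]; first exact: Om0.
apply: OmD => //.
by rewrite freegUZ scalerA; apply: Om_Jd; apply: JMr.
Qed.

Lemma Tr_subg : subg Tr. Proof. exact: zspan_subg. Qed.
Hint Resolve Tr_subg : core.
Lemma trDl x x' w : J x -> J x' -> Tr (gp (x + x') w - gp x w - gp x' w).
Proof. by move=> Jx Jx'; apply: zspan_gen; left; exists x, x', w. Qed.
Lemma trDr x w w' : J x -> Tr (gp x (w + w') - gp x w - gp x w').
Proof. by move=> Jx; apply: zspan_gen; right; left; exists x, w, w'. Qed.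
Lemma trZ a x w : J x -> Tr (gp (a * x) w - gp x (a *: w)).
Proof. by move=> Jx; apply: zspan_gen; right; right; left; exists a, x, w. Qed.
Lemma trOm x n : J x -> Om n -> Tr (gp x n).
Proof. by move=> Jx On; apply: zspan_gen; right; right; right; right; exists x, n. Qed.

Lemma gp_eqOm x w w' : J x -> Om (w - w') -> Tr (gp x w - gp x w').
Proof.
move=> Jx O; rewrite -{1}[w](subrK w') (idB _ (gp x (w - w'))).
by apply: sgD => //; [apply: trDr | apply: trOm].
Qed.
Lemma gp_leib a u v : J a -> Tr (gp a (ds (u * v)) - (gp (a * u) (ds v) + gp (a * v) (ds u))).
Proof.
move=> Ja; apply: (eqv_trans Tr_subg (b := gp a (u *: ds v + v *: ds u))).
  by apply: gp_eqOm => //; rewrite idC; apply: Om_mul.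
apply: (eqv_trans Tr_subg (b := gp a (u *: ds v) + gp a (v *: ds u))).
  by rewrite idC; apply: trDr.
apply: eqv_add => //; apply: eqv_sym => //; rewrite mulrC; exact: trZ.
Qed.
Lemma gp_dJ q z : J q -> Rim z -> Tr (gp q (ds z)).
Proof. by move=> Jq Rz; apply: trOm => //; apply: Om_im. Qed.
Lemma gp_JJ a b w : J a -> J b -> Tr (gp (a * b) w).
Proof.
move=> Ja Jb; rewrite mulrC; apply: (eqv_mem Tr_subg (trZ _ _ Ja)).
by apply: trOm => //; apply: Om_J.
Qed.
Lemma gp0l w : Tr (gp 0 w).
Proof.
have := trDl w J0 J0; rewrite addr0 subrr sub0r => H.
by rewrite -[gp 0 w]opprK; apply: sgN.
Qed.

Lemma Rim_alg (c : k) : Rim (c%:A). Proof. by exists (c%:A); rewrite rmorph_alg. Qed.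

Lemma gp_kz (c : k) y s : J y -> Tr (gp (c *: y) (ds s) - gp y (ds (c *: s))).
Proof.
move=> Jy; rewrite -[c *: y]mulr_algl; apply: (eqv_trans Tr_subg (trZ _ _ Jy)).
apply: gp_eqOm => //; rewrite -[c *: s]mulr_algl (idD _ _ (s *: ds c%:A)); apply: OmN.
apply: OmD; first exact: Om_mul.
by apply: OmZ; apply: Om_im; apply: Rim_alg.
Qed.

Section Part1.
Variable p : S -> S.
Hypotheses (pJ : forall v, J (p v)) (pD : forall u v, p (u + v) = p u + p v)
  (pZ : forall (c : k) v, p (c *: v) = c *: p v) (pid : forall x, J x -> p x = x).

Definition psi (pr : S * S) : G := gp (p pr.1) (ds pr.2) - gp (p pr.2) (ds pr.1).

Lemma gp_dsD q s t : J q -> Tr (gp q (ds (s + t)) - (gp q (ds s) + gp q (ds t))).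
Proof.
move=> Jq; apply: (eqv_trans Tr_subg (b := gp q (ds s + ds t))).
  by apply: gp_eqOm => //; rewrite idC; apply: Om_add.
by rewrite idC; apply: trDr.
Qed.

Lemma psi_Dl v v' w : Tr (psi (v + v', w) - (psi (v, w) + psi (v', w))).
Proof.
rewrite /psi /=.
apply: (eqv_trans Tr_subg (b := (gp (p v) (ds w) + gp (p v') (ds w)) - (gp (p w) (ds v) + gp (p w) (ds v')))).
  apply: eqv_sub => //; last exact: gp_dsD.
  by rewrite pD idC; apply: trDl.
by apply: (eqv_eq Tr_subg); rewrite idE.
Qed.

Lemma psi_Dr v w w' : Tr (psi (v, w + w') - (psi (v, w) + psi (v, w'))).
Proof.
rewrite /psi /=.
apply: (eqv_trans Tr_subg (b := (gp (p v) (ds w) + gp (p v) (ds w')) - (gp (p w) (ds v) + gp (p w') (ds v)))).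
  apply: eqv_sub => //; first exact: gp_dsD.
  by rewrite pD idC; apply: trDl.
by apply: (eqv_eq Tr_subg); rewrite idE.
Qed.

Lemma psi_Z (c : k) v w : Tr (psi (c *: v, w) - psi (v, c *: w)).
Proof.
rewrite /psi /= !pZ; apply: eqv_sub => //; first exact: gp_kz.
by apply: eqv_sym => //; apply: gp_kz.
Qed.

Lemma Psi_TT u : TT u -> Tr (fgext psi u).
Proof.
move=> Hu; apply: (zspan_ind (h := fgext psi) (Q := Tr)) Hu => //.
move=> t [[v [v' [w [_ _ _ ->]]]] | [[v [w [w' [_ _ _ ->]]]] | [[a [v [w [_ _ ->]]]] | [[n [w [_ [] _ _]]] | [v [n [_ _ []]]]]]]].
- by rewrite !raddfB /= !fgext_gen -idC; apply: psi_Dl.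
- by rewrite !raddfB /= !fgext_gen -idC; apply: psi_Dr.
- by rewrite !raddfB /= !fgext_gen; apply: psi_Z.
Qed.

Lemma psi_b x y z : J x \/ J y \/ J z ->
  Tr (psi (x * y, z) - psi (x, y * z) + psi (z * x, y)).
Proof.
have JxR u : J u -> Rim u by apply: JRim.
case=> [Jx|[Jy|Jz]].
- have H1 : Tr (psi (x * y, z) - (gp (x * y) (ds z) - (0 + 0))).
    rewrite /psi /= pid; last exact: JMr.
    apply: eqv_sub => //; first exact: eqv_refl.
    apply: (eqv_trans Tr_subg (gp_leib _ _ (pJ z))); apply: eqv_add => //; rewrite subr0.
      by rewrite mulrC; apply: gp_JJ.
    by apply: gp_dJ; [apply: JMr | apply: JRim].
  have H2 : Tr (psi (x, y * z) - ((gp (x * y) (ds z) + gp (x * z) (ds y)) - 0)).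
    rewrite /psi /= pid //.
    apply: eqv_sub => //; first exact: gp_leib.
    by rewrite subr0; apply: gp_dJ; [apply: pJ | apply: JRim].
  have H3 : Tr (psi (z * x, y) - (gp (x * z) (ds y) - (0 + 0))).
    rewrite /psi /= pid; last exact: JM.
    rewrite [z * x]mulrC.
    apply: eqv_sub => //; first exact: eqv_refl.
    apply: (eqv_trans Tr_subg (gp_leib _ _ (pJ y))); apply: eqv_add => //; rewrite subr0.
      by apply: gp_JJ.
    by apply: gp_dJ; [apply: JMr | apply: JRim].
  apply: eqv_0; rewrite -(id2 (gp (x * y) (ds z)) (gp (x * z) (ds y))).
  by apply: eqv_add => //; apply: eqv_sub.
- have H1 : Tr (psi (x * y, z) - (gp (x * y) (ds z) - (0 + 0))).
    rewrite /psi /= pid; last exact: JM.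
    apply: eqv_sub => //; first exact: eqv_refl.
    apply: (eqv_trans Tr_subg (gp_leib _ _ (pJ z))); apply: eqv_add => //; rewrite subr0.
      by apply: gp_dJ; [apply: JMr | apply: JRim].
    by apply: gp_JJ.
  have H2 : Tr (psi (x, y * z) - ((0 + 0) - gp (y * z) (ds x))).
    rewrite /psi /= (pid (JMr _ Jy)).
    apply: eqv_sub => //; last exact: eqv_refl.
    apply: (eqv_trans Tr_subg (gp_leib _ _ (pJ x))); apply: eqv_add => //; rewrite subr0.
      by apply: gp_JJ.
    by apply: gp_dJ; [apply: JMr | apply: JRim].
  have H3 : Tr (psi (z * x, y) - (0 - (gp (y * z) (ds x) + gp (x * y) (ds z)))).
    rewrite /psi /= (pid Jy).
    apply: eqv_sub => //; last by rewrite [x * y]mulrC; exact: gp_leib.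
    by rewrite subr0; apply: gp_dJ; [apply: pJ | apply: JRim].
  apply: eqv_0; rewrite -(id3 (gp (x * y) (ds z)) (gp (y * z) (ds x))).
  by apply: eqv_add => //; apply: eqv_sub.
- have H1 : Tr (psi (x * y, z) - (0 - (gp (z * x) (ds y) + gp (z * y) (ds x)))).
    rewrite /psi /= (pid Jz).
    apply: eqv_sub => //; last exact: gp_leib.
    by rewrite subr0; apply: gp_dJ; [apply: pJ | apply: JRim].
  have H2 : Tr (psi (x, y * z) - ((0 + 0) - gp (z * y) (ds x))).
    rewrite /psi /= (pid (JM _ Jz)) [y * z]mulrC.
    apply: eqv_sub => //; last exact: eqv_refl.
    apply: (eqv_trans Tr_subg (gp_leib _ _ (pJ x))); apply: eqv_add => //; rewrite subr0.
      by apply: gp_JJ.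
    by apply: gp_dJ; [apply: JMr | apply: JRim].
  have H3 : Tr (psi (z * x, y) - (gp (z * x) (ds y) - (0 + 0))).
    rewrite /psi /= pid; last exact: JMr.
    apply: eqv_sub => //; first exact: eqv_refl.
    apply: (eqv_trans Tr_subg (gp_leib _ _ (pJ y))); apply: eqv_add => //; rewrite subr0.
      by apply: gp_JJ.
    by apply: gp_dJ; [apply: JMr | apply: JRim].
  apply: eqv_0; rewrite -(id1 (gp (z * x) (ds y)) (gp (z * y) (ds x))).
  by apply: eqv_add => //; apply: eqv_sub.
Qed.

Lemma Psi_HH u : HHbound J u -> Tr (fgext psi u).
Proof.
move=> Hu; apply: (zspan_ind (h := fgext psi) (Q := Tr)) Hu => //.
move=> t [x [y [z [H ->]]]].
by rewrite raddfD raddfB /= !fgext_gen; apply: psi_b.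
Qed.

Lemma Psi_tmap v : Tr (fgext psi (tmap f v)).
Proof.
rewrite /tmap (fgext_comp (fgext psi)); apply: fgext_in => // x _.
rewrite /= fgext_gen /psi /=; apply: sgB => //; apply: gp_dJ => //; by eexists.
Qed.

Lemma part1 d : tagged_valid J d -> K (tag_incl d) -> Tr (tag_phi d).
Proof.
move=> Hd [a [b [c [Ha [Hb [[v [_ ->]] E]]]]]].
have HPsi : Tr (fgext psi (tag_incl d)).
  rewrite E !raddfD; apply: sgD => //; last exact: Psi_tmap.
  by apply: sgD => //; [apply: Psi_TT | apply: Psi_HH].
apply: (eqv_mem Tr_subg _ HPsi).
rewrite /tag_incl (fgext_comp (fgext psi)) /tag_phi fgextB_fun; apply: fgext_in => // g gd.
have := Hd g gd; case: g {gd} => [[] [x r]] /= Jg; rewrite fgext_gen /psi /=.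
- rewrite (pid Jg) -/(gp x (ds r)) opprB addrCA subrr addr0.
  by apply: gp_dJ => //; apply: JRim.
- rewrite (pid Jg) -/(gp x (ds r)) opprB addKr; apply: sgN => //.
  by apply: gp_dJ => //; apply: JRim.
Qed.
End Part1.

Lemma TT_subg : subg TT. Proof. exact: zspan_subg. Qed.
Hint Resolve TT_subg : core.
Lemma ttDl (v v' w : S) : TT (fgen (v + v', w) - fgen (v, w) - fgen (v', w)).
Proof. by apply: zspan_gen; left; exists v, v', w. Qed.
Lemma ttDr (v w w' : S) : TT (fgen (v, w + w') - fgen (v, w) - fgen (v, w')).
Proof. by apply: zspan_gen; right; left; exists v, w, w'. Qed.
Lemma ttZ (c : k) (v w : S) : TT (fgen (c *: v, w) - fgen (v, c *: w)).
Proof. by apply: zspan_gen; right; right; left; exists c, v, w. Qed.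
Lemma tt0l (s : S) : TT (fgen (0, s)).
Proof. have := ttDl 0 0 s; rewrite addr0 subrr sub0r => H; rewrite -[fgen _]opprK; exact: sgN. Qed.

Definition theta (pr : S^o * W) : F :=
  \sum_(s <- dom pr.2) fgen (((pr.1 : S) * coeff s pr.2), s).

Lemma th_seq (x : S) (w : W) L : uniq L -> {subset dom w <= L} ->
  TT (theta (x, w) - \sum_(s <- L) fgen (x * coeff s w, s)).
Proof.
move=> uL sub; apply: eqv_sym => //; apply: sum_dom_L => // s sn.
by rewrite coeff_outdom // mulr0; apply: tt0l.
Qed.

Lemma th_Dr (x : S) (w w' : W) : TT (theta (x, w + w') - (theta (x, w) + theta (x, w'))).
Proof.
set L := undup (dom w ++ dom w').
have uL : uniq L by apply: undup_uniq.
have sub1 : {subset dom w <= L} by move=> y yd; rewrite mem_undup mem_cat yd.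
have sub2 : {subset dom w' <= L} by move=> y yd; rewrite mem_undup mem_cat yd orbT.
have sub3 : {subset dom (w + w') <= L} by move=> y /domD_subset; rewrite mem_undup.
apply: (eqv_trans TT_subg (th_seq x uL sub3)).
apply: eqv_sym => //; apply: (eqv_trans TT_subg (b := \sum_(s <- L) fgen (x * coeff s w, s) + \sum_(s <- L) fgen (x * coeff s w', s))).
  by apply: eqv_add => //; apply: th_seq.
rewrite -big_split -sumrB; apply: sg_sum => // s _.
by rewrite coeffD mulrDr; apply: eqv_sym => //; rewrite idC; apply: ttDl.
Qed.

Lemma th_Dl (x x' : S) (w : W) : TT (theta (x + x', w) - (theta (x, w) + theta (x', w))).
Proof.
rewrite /theta /= -big_split -sumrB; apply: sg_sum => // s _.
by rewrite mulrDl idC; apply: ttDl.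
Qed.

Lemma th_Z (a x : S) (w : W) : TT (theta (a * x, w) - theta (x, a *: w)).
Proof.
apply: eqv_sym => //.
apply: (eqv_trans TT_subg (th_seq x (uniq_dom w) (domZ_subset (c := a) (D := w)))).
apply: (eqv_eq TT_subg); rewrite /theta /=; apply: eq_bigr => s _.
by rewrite coeffZ mulrCA mulrA.
Qed.

Lemma th_gen (x s : S) : theta (x, ds s) = fgen (x, s).
Proof. by rewrite /theta /= /dsym domU1 big_seq1 coeffU eqxx mul1r mulr1. Qed.

Lemma th_0 (x : S) : theta (x, 0) = 0.
Proof. by rewrite /theta /= dom0 big_nil. Qed.

Lemma HHcyc_subg : subg (HHcycles I).
Proof.
split.
  exists 0; split; first exact: sg0 (zspan_subg _).
  by rewrite subrr; exact: sg0 (zspan_subg _).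
move=> a b [a0 [Ha0 Ta]] [b0 [Hb0 Tb]]; exists (a0 - b0); split.
  exact: sgB (zspan_subg _) _ _ Ha0 Hb0.
exact: eqv_sub (zspan_subg _) _ _ _ _ Ta Tb.
Qed.

Lemma IM_subg : subg (fun u => exists v, HHcycles I v /\ u = tmap f v).
Proof.
split; first by exists 0; split; [exact: sg0 HHcyc_subg | rewrite /tmap raddf0].
move=> a b [va [Ha ->]] [vb [Hb ->]]; exists (va - vb); split.
  exact: sgB HHcyc_subg _ _ Ha Hb.
by rewrite /tmap raddfB.
Qed.

Lemma K_subg : subg K.
Proof.
split; first by exists 0, 0, 0; split; [exact: sg0 | split; [exact: sg0 (zspan_subg _) | split; [exact: sg0 IM_subg | rewrite !addr0]]].
move=> u v [a [b [c [Ha [Hb [Hc ->]]]]]] [a' [b' [c' [Ha' [Hb' [Hc' ->]]]]]].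
exists (a - a'), (b - b'), (c - c'); split; first exact: sgB.
split; first exact: sgB (zspan_subg _) _ _ Hb Hb'.
split; first exact: sgB IM_subg _ _ Hc Hc'.
by rewrite !idE.
Qed.
Hint Resolve K_subg : core.

Lemma K_TT u : TT u -> K u.
Proof. by move=> H; exists u, 0, 0; split => //; split; [exact: sg0 (zspan_subg _) | split; [exact: sg0 IM_subg | rewrite !addr0]]. Qed.
Lemma K_HH u : HHbound J u -> K u.
Proof. by move=> H; exists 0, u, 0; split; [exact: sg0 | split => //; split; [exact: sg0 IM_subg | rewrite addr0 add0r]]. Qed.
Lemma K_im v : HHcycles I v -> K (tmap f v).
Proof. by move=> H; exists 0, 0, (tmap f v); split; [exact: sg0 | split; [exact: sg0 (zspan_subg _) | split; [by exists v | rewrite !add0r]]]. Qed.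
Lemma K_b x y z : J x \/ J y \/ J z -> K (fgen (x * y, z) - fgen (x, y * z) + fgen (z * x, y)).
Proof. by move=> H; apply: K_HH; apply: zspan_gen; exists x, y, z. Qed.
Lemma K_f a c : I a \/ I c -> K (fgen (f a, f c)).
Proof.
move=> H; have -> : fgen (f a, f c) = tmap f (fgen (a, c)) by rewrite /tmap fgext_gen.
apply: K_im; exists (fgen (a, c)); split; last by rewrite subrr; exact: sg0 (zspan_subg _).
apply: zspan_gen; case: H => H; [exists a, c | exists c, a]; split => //; [left | right] => //.
Qed.

Lemma th_B (y : S) (A B : W) : TT (theta (y, A - B) - (theta (y, A) - theta (y, B))).
Proof. exact: (eqv_subF (g := fun w => theta (y, w)) TT_subg (th_Dr y)). Qed.

Lemma th_B3 (y : S) (A B C : W) :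
  TT (theta (y, A - B - C) - (theta (y, A) - theta (y, B) - theta (y, C))).
Proof.
apply: (eqv_trans TT_subg (th_B y (A - B) C)).
by apply: eqv_sub => //; [apply: th_B | apply: eqv_refl].
Qed.

Lemma th_Om n : Om n -> forall x, J x -> K (theta (x, n)).
Proof.
move=> On; move: n On; apply: (@lspan_ind _ _ _ (fun n => forall x, J x -> K (theta (x, n)))).
- by move=> x _; rewrite th_0; exact: sg0.
- move=> u v Hu Hv x Jx; apply: (eqv_mem K_subg (b := theta (x, u) + theta (x, v))).
    by apply: K_TT; apply: th_Dr.
  by apply: sgD => //; [apply: Hu | apply: Hv].
move=> a r Hr x Jx; apply: (eqv_mem K_subg (b := theta (a * x, r))).
  by apply: K_TT; apply: eqv_sym => //; apply: th_Z.
have Jy : J (a * x) by apply: JM.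
move: (a * x) Jy => y Jy.
case: Hr => [[s [t ->]]|[[s [t ->]]|[s [[c ->] ->]]]].
- apply: K_TT; apply: (eqv_mem TT_subg (th_B3 _ _ _ _)).
  by rewrite !th_gen; apply: ttDr.
- apply: (eqv_mem K_subg (b := fgen (y, s * t) - fgen (s * y, t) - fgen (t * y, s))).
    apply: K_TT; apply: (eqv_trans TT_subg (th_B3 _ _ _ _)).
    apply: eqv_sub => //; [apply: eqv_sub => //; [rewrite th_gen; exact: eqv_refl|] |];
      by apply: eqv_sym => //; rewrite -th_gen; apply: th_Z.
  rewrite idG [s * y]mulrC; apply: sgN => //; apply: K_b; by left.
- rewrite th_gen; case: Jy => a' [Ia' ->]; apply: K_f; by left.
Qed.

Lemma Theta_Tr t : Tr t -> K (fgext theta t).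
Proof.
move=> Ht; apply: (zspan_ind (h := fgext theta) (Q := K)) Ht => //.
move=> u [[v [v' [w [_ _ _ ->]]]] | [[v [w [w' [Jv _ _ ->]]]] | [[a [v [w [Jv _ ->]]]] | [[n [w [_ [] _ _]]] | [v [n [Jv _ On ->]]]]]]].
- by rewrite !raddfB /= !fgext_gen -idC; apply: K_TT; apply: th_Dl.
- by rewrite !raddfB /= !fgext_gen -idC; apply: K_TT; apply: th_Dr.
- by rewrite !raddfB /= !fgext_gen; apply: K_TT; apply: th_Z.
- by rewrite /= fgext_gen; apply: th_Om.
Qed.

Lemma Theta_phi d : tagged_valid J d -> K (fgext theta (tag_phi d) - tag_incl d).
Proof.
move=> Hd; rewrite /tag_phi (fgext_comp (fgext theta)) /tag_incl fgextB_fun.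
apply: fgext_in => // g gd; have := Hd g gd; case: g {gd} => [[] [x r]] /= Jg.
- by rewrite fgext_gen th_gen subrr; exact: sg0.
- rewrite raddfN /= fgext_gen th_gen -opprD; apply: sgN => //.
  rewrite -(idH (fgen (r, x)) (fgen (x, r)) (fgen (1, r * x))).
  apply: sgD => //; first by have := @K_b 1 r x; rewrite mul1r mulr1; apply; right; left.
  case: (JMr x Jg) => a [Ia E].
  rewrite E -(rmorph1 f); apply: K_f; by right.
Qed.

Lemma part2 d : tagged_valid J d -> Tr (tag_phi d) -> K (tag_incl d).
Proof.
move=> Hd Ht; have H1 := Theta_Tr Ht; have H2 := Theta_phi Hd.
have -> : tag_incl d = fgext theta (tag_phi d) - (fgext theta (tag_phi d) - tag_incl d).
  by rewrite opprB addrC subrK.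
exact: sgB.
Qed.

Lemma part4 a d : tagged_valid J d ->
  Tr (tag_phi (tag_act (f a) d) - tens_act (f a) (tag_phi d)).
Proof.
move=> Hd; rewrite /tag_act /tag_phi (fgext_comp (fgext _)) /tens_act (fgext_comp (fgext _)) fgextB_fun.
apply: fgext_in => // g gd; have := Hd g gd; case: g {gd} => [[] [x r]] /= Jg.
- by rewrite !fgext_gen /= subrr; exact: sg0.
rewrite !fgext_gen raddfN /= fgext_gen /=; apply: eqv_opp => //.
rewrite -/(gp r (ds (f a * x))) -/(gp (f a * r) (ds x)).
apply: (eqv_trans Tr_subg (gp_leib _ _ Jg)).
rewrite -[gp (f a * r) _]addr0; apply: eqv_add => //.
  by rewrite mulrC; exact: eqv_refl.
by rewrite subr0; apply: gp_dJ; [apply: JMr | exists a].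
Qed.

Lemma Om_quot_Om n : Omega_quot_rel Rim J n -> Om n.
Proof.
move: n; apply: lspan_ind; first exact: Om0.
  by move=> u v; apply: OmD.
move=> a u [[y [s [Jy ->]]]|[[y [s [Jy ->]]]|[[s [t ->]]|[[s [t ->]]|[s [Rs ->]]]]]]; apply: OmZ.
- exact: Om_Jd.
- rewrite -(subrK (ds y) (ds (s + y) - ds s)); apply: OmD; first exact: Om_add.
  by apply: Om_im; apply: JRim.
- exact: Om_add.
- exact: Om_mul.
- exact: Om_im.
Qed.

Lemma Om_Om_quot n : Om n -> Omega_quot_rel Rim J n.
Proof.
move: n; apply: lspan_ind; first exact: lspan0.
  by move=> u v; apply: lspanD.
move=> a u H; apply: lspanZ; apply: lspan_gen; right; right; exact: H.
Qed.

Lemma P_add w a b : J a /\ Tr (gp a w) -> J b /\ Tr (gp b w) -> J (a + b) /\ Tr (gp (a + b) w).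
Proof.
move=> [Ja Ta] [Jb Tb]; split; first exact: JD.
apply: (eqv_mem Tr_subg (b := gp a w + gp b w)); first by rewrite idC; apply: trDl.
exact: sgD.
Qed.

Lemma P_opp w a : J a /\ Tr (gp a w) -> J (- a) /\ Tr (gp (- a) w).
Proof.
move=> [Ja Ta]; split; first exact: JN.
have X := trDl w Ja (JN Ja).
have -> : gp (- a) w = (gp (a + - a) w - gp a w) - (gp (a + - a) w - gp a w - gp (- a) w).
  by rewrite opprB addrC subrK.
apply: sgB => //; apply: sgB => //; rewrite subrr; exact: gp0l.
Qed.

Lemma P_mulz w a (m : int) : J a /\ Tr (gp a w) -> J (a *~ m) /\ Tr (gp (a *~ m) w).
Proof.
move=> Pa.
have Pn n : J (a *+ n) /\ Tr (gp (a *+ n) w).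
  elim: n => [|n IH]; first by rewrite mulr0n; split; [exact: J0 | exact: gp0l].
  by rewrite mulrS; apply: P_add.
case: m => n.
  exact: Pn.
rewrite NegzE mulrNz; apply: P_opp.
exact: Pn.
Qed.

Lemma Tr_sq n w : ideal_sq J n -> Tr (gp n w).
Proof.
move=> [l [Hl ->]].
suff : J (\sum_(p <- l) p.1 *~ p.2) /\ Tr (gp (\sum_(p <- l) p.1 *~ p.2) w) by case.
elim: l Hl => [|q l IH] Hl; first by rewrite big_nil; split; [exact: J0 | exact: gp0l].
rewrite big_cons; apply: P_add; last by apply: IH => p pl; apply: Hl; rewrite inE pl orbT.
apply: P_mulz; have [y [z [Jy [Jz ->]]]] := Hl q (mem_head _ _).
by split; [apply: JMr | apply: gp_JJ].
Qed.

Lemma part5 t : Tr t <-> tens_rel (V := S^o) (W := {freeg S / S})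
                J (ideal_sq J) (fun _ => True) (Omega_quot_rel Rim J) t.
Proof.
split.
- move=> Ht; apply: (zspan_min (zspan_subg _)) Ht.
  move=> u [H|[H|[H|[[n [w [_ [] _ _]]]|[v [n [Jv _ On ->]]]]]]]; apply: zspan_gen.
  + by left.
  + by right; left.
  + by right; right; left.
  + by right; right; right; right; exists v, n; split => //; apply: Om_Om_quot.
- move=> Ht; apply: (zspan_min Tr_subg) Ht.
  move=> u [H|[H|[H|[[n [w [Jn Sn _ ->]]]|[v [n [Jv _ On ->]]]]]]].
  + by apply: zspan_gen; left.
  + by apply: zspan_gen; right; left.
  + by apply: zspan_gen; right; right; left.
  + exact: Tr_sq.
  + by apply: trOm => //; apply: Om_quot_Om.
Qed.

Lemma gp_sum x (T : Type) (r : seq T) (Fn : T -> W) : J x ->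
  Tr (gp x (\sum_(i <- r) Fn i) - \sum_(i <- r) gp x (Fn i)).
Proof.
move=> Jx; elim: r => [|a r IH]; first by rewrite !big_nil subr0; apply: trOm => //; apply: Om0.
rewrite !big_cons; apply: (eqv_trans Tr_subg (b := gp x (Fn a) + gp x (\sum_(i <- r) Fn i))).
  by rewrite idC; apply: trDr.
by apply: eqv_add => //; apply: eqv_refl.
Qed.

Lemma part3 t : gens_in (fun p : S^o * {freeg S / S} => J p.1) t ->
  exists d, tagged_valid J d /\ Tr (tag_phi d - t).
Proof.
move=> Ht.
pose dq (q : S^o * W) : {freeg (bool * (S * S)) / int} :=
  \sum_(s <- dom q.2) fgen (true, ((q.1 : S) * coeff s q.2, s)).
exists (fgext dq t); split.
  apply: fgext_in; first exact: gens_subg.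
  case=> x w /Ht /= Jx; apply: sg_sum; first exact: gens_subg.
  by move=> s _; apply: gens_gen => /=; apply: JMr.
rewrite /tag_phi (fgext_comp (fgext _)) -{2}[t]fgext_id fgextB_fun.
apply: fgext_in => //; case=> x w /Ht /= Jx.
rewrite raddf_sum /=; apply: eqv_sym => //.
rewrite -[X in fgen (_, X)]freeg_sumE.
apply: (eqv_trans Tr_subg (gp_sum _ _ Jx)).
rewrite -sumrB; apply: sg_sum => // s _.
rewrite fgext_gen /= -/(gp (x * coeff s w) (ds s)) freegUZ mulrC.
by apply: eqv_sym => //; apply: trZ.
Qed.
End Main.


Theorem theorem3p6 (k : fieldType) (R S : comAlgType k)
    (f : {lrmorphism R -> S}) (I : R -> Prop) :
  is_ideal I ->
  (forall a b, I a -> I b -> f a = f b -> a = b) ->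
  is_ideal (fun s : S => exists a, I a /\ s = f a) ->
  let J : S -> Prop := fun s => exists a, I a /\ s = f a in
  let Rim : S -> Prop := fun s => exists a, s = f a in
  (* kernel of  S(x)I+I(x)S -> HH_0(R,S,I) = coker(HH_1(R,I) -> HH_1(S,I)) *)
  let K := sum3 (@TT_rel k S) (HHbound J)
                (fun u => exists v, HHcycles I v /\ u = tmap f v) in
  (* relations of I (x)_S Omega_{S/R} *)
  let Trel := tens_rel (V := S^o) (W := {freeg S / S})
                J (fun _ => False) (fun _ => True) (Omega_rel Rim) in
  (* relations of (I/I^2) (x)_{S/I} Omega_{(S/I)/(R/I)} *)
  let Trel2 := tens_rel (V := S^o) (W := {freeg S / S})
                J (ideal_sq J) (fun _ => True) (Omega_quot_rel Rim J) in
  [/\ (* the map is well defined on HH_0(R,S,I) *)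
      (forall d, tagged_valid J d -> K (tag_incl d) -> Trel (tag_phi d)),
      (* injective *)
      (forall d, tagged_valid J d -> Trel (tag_phi d) -> K (tag_incl d)),
      (* surjective *)
      (forall t, gens_in (fun p : S^o * {freeg S / S} => J p.1) t ->
         exists d, tagged_valid J d /\ Trel (tag_phi d - t)),
      (* R-linear *)
      (forall a d, tagged_valid J d ->
         Trel (tag_phi (tag_act (f a) d) - tens_act (f a) (tag_phi d))) &
      (* x (x) dr |-> x (x) dr  induces  I (x)_S Omega_{S/R} ~= (I/I^2) (x) Omega *)
      (forall t, gens_in (fun p : S^o * {freeg S / S} => J p.1) t ->
         (Trel t <-> Trel2 t))].
Proof.
move=> hI hinj hJ J Rim K Trel Trel2.
have [p [pJ pD pZ pid]] := @proj_exists k S J (J0 hJ) (@JD _ _ _ _ _ hJ) (@JZ _ _ _ _ _ hJ).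
split.
- exact: (part1 hJ pJ pD pZ pid).
- exact: (part2 hJ).
- exact: (part3 hJ).
- exact: (part4 hJ).
- move=> t _; exact: (part5 hJ).
Qed.
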